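(* Under Assumption A6, let $P^*$ be the constructed probability measure on $(X^*,Y^*(0))$. Then $P^*(X^*\le0)=P(X=0)$ and, for every $y\in\mathbb R$, $$P^*\big(Y^*(0)\le y\mid X^*\le0\big)=P\big(Y\le y\mid X=0\big);$$ that is, the distribution of $Y^*(0)$ given $X^*\le0$ under $P^*$ equals the distribution of $Y$ given $X=0$ under $P$.
   Context: Setting: a probability measure $P$ under which $X\ge0$ is a real random variable with $P(X=0)>0$ having a density $f_X$ on $(0,\infty)$, $Y(0)$ is a real random variable with $E|Y(0)|<\infty$ (the potential outcome at the bunching point $0$), and the observed outcome satisfies $Y=Y(0)$ on $\{X=0\}$. $Q_{Y(0)\mid X=x}(e):=\inf\{y:P(Y(0)\le y\mid X=x)\ge e\}$ and $F_{Y(0)}$ is the CDF of $Y(0)$. Assumption A6: there are functions $s:(0,\infty)\to\mathbb R$ and $\phi:(0,1)\to\mathbb R$ such that (i) $Q_{Y(0)\mid X=x}(e)=s(x)+\phi(e)$ for all $x>0$, $e\in(0,1)$; (ii) $s$ is real analytic on $(0,\infty)$ and extends to a real analytic function $s^*:\mathbb R\to\mathbb R$; (iii) $\phi$ is strictly increasing, and, writing $G(t):=\mathrm{Leb}\{e\in(0,1):\phi(e)\le t\}$ (the generalized inverse $\phi^{-1}$), there is a continuous $h:\mathbb R\to[0,\infty)$ with $h=f_X$ on $(0,\infty)$ such that $\int_{-\infty}^{\infty}G(y-s^*(x))\,h(x)\,dx=F_{Y(0)}(y)$ for all $y\in\mathbb R$. Construction of $P^*$: under $P^*$, $X^*$ has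 CDF $F^*(x)=\int_{-\infty}^x h(t)\,dt$ for $x<0$ and $F^*(x)=P(X\le x)$ for $x\ge0$, and the conditional distribution of $Y^*(0)$ given $X^*=x$ has quantile function $e\mapsto s^*(x)+\phi(e)$, $e\in(0,1)$ (equivalently conditional CDF $y\mapsto G(y-s^*(x))$). *)

(* Defs.v *)
From HB Require Import structures.
From mathcomp Require Import all_boot all_order all_algebra.
From mathcomp Require Import all_classical all_reals all_analysis.
From mathcomp Require Import measurable_realfun.
Set Implicit Arguments. Unset Strict Implicit. Unset Printing Implicit Defensive.
Import Order.TTheory GRing.Theory Num.Theory.
Import numFieldNormedType.Exports.
Local Open Scope classical_set_scope.
Local Open Scope ring_scope.

Definition real_analytic_on {R : realType} (D : set R) (f : R -> R) : Prop :=
  forall x0, D x0 -> exists r : R, 0 < r /\ exists a : nat -> R,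
    forall x, `|x - x0| < r ->
      (fun n => \sum_(0 <= k < n) a k * (x - x0) ^+ k) @ \oo --> f x.

Definition quantile {R : realType} (nu : probability R R) (e : R) : R :=
  inf [set y : R | (e%:E <= nu [set` `]-oo, y]])%E].

Definition Ginv {R : realType} (phi : R -> R) (t : R) : \bar R :=
  (@lebesgue_measure R) [set e : R | 0 < e < 1 /\ phi e <= t].

Definition cond_distribution {R : realType} d (T : measurableType d)
    (P : probability T R) (X Y : T -> R) (D : set R)
    (kappa : R -> probability R R) : Prop :=
  (forall B, measurable B -> measurable_fun [set: R] (fun x : R => kappa x B : \bar R)) /\
  forall A B, measurable A -> A `<=` D -> measurable B ->
    P (X @^-1` A `&` Y @^-1` B) = (\int[pushforward P X]_(x in A) kappa x B)%E.

Definition condP {R : realType} d (T : measurableType d)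
    (P : probability T R) (A B : set T) : R :=
  fine (P (A `&` B)) / fine (P B).

(* Main.v *)
Require Import Defs.
From HB Require Import structures.
From mathcomp Require Import all_boot all_order all_algebra.
From mathcomp Require Import all_classical all_reals all_analysis.
From mathcomp Require Import measurable_realfun.
From mathcomp Require Import lra.
Import Order.TTheory GRing.Theory Num.Theory.
Import numFieldNormedType.Exports.
Local Open Scope classical_set_scope.
Local Open Scope ring_scope.
Section Aux.
Context {R : realType}.
Local Open Scope ereal_scope.

Lemma cvg_ub {u : nat -> \bar R} {l a} : u @ \oo --> l -> (forall n, u n <= a) -> l <= a.
Proof. by move=> ul ua; rewrite -(cvg_lim _ ul) //; apply: lime_le; [exact: cvgP ul | exact: nearW]. Qed.

Lemma cvg_lb {u : nat -> \bar R} {l a} : u @ \oo --> l -> (forall n, a <= u n) -> a <= l.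
Proof. by move=> ul ua; rewrite -(cvg_lim _ ul) //; apply: lime_ge; [exact: cvgP ul | exact: nearW]. Qed.

Lemma setle_itv (y : R) : [set z : R | (z <= y)%R] = `]-oo, y]%classic.
Proof. by apply/seteqP; split => z; rewrite /= in_itv. Qed.
End Aux.

Section quant.
Context {R : realType} (nu : probability R R).
Local Open Scope ereal_scope.
Let F (y : R) := nu `]-oo, y]%classic.

Let F_nd (x y : R) : (x <= y)%R -> F x <= F y.
Proof. by move=> xy; rewrite /F le_measure ?inE//; apply: subitvPr; rewrite bnd_simp. Qed.

Let exists_ge (e : R) : (e < 1)%R -> exists y, e%:E <= F y.
Proof.
move=> e1; apply: contrapT => /forallNP H.
have Hn n : F n%:R <= e%:E by apply/ltW; rewrite ltNge; apply/negP => /(H _).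
have UE : \bigcup_n `]-oo, (n%:R : R)]%classic = setT.
  rewrite -subTset => t _ /=; exists (Num.trunc `|t|).+1 => //=; rewrite in_itv/=.
  by rewrite (le_trans (ler_norm t))// ltW// truncnS_gt.
have cv : (F \o (fun n : nat => n%:R)) x @[x --> \oo] --> 1.
  rewrite -(probability_setT nu) -UE; apply: nondecreasing_cvg_mu => [n||n m nm]; first exact: measurable_itv.
    by apply: bigcup_measurable => n _; exact: measurable_itv.
  by apply/subsetPset => x/=; rewrite !in_itv/= => /le_trans; apply; rewrite ler_nat.
have := cvg_ub cv Hn; rewrite lee_fin => /(lt_le_trans e1); by rewrite ltxx.
Qed.

Let exists_lt (e : R) : (0 < e)%R -> exists z, F z < e%:E.
Proof.
move=> e0; apply: contrapT => /forallNP H.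
have Hn n : e%:E <= F (- n%:R)%R by rewrite leNgt; apply/negP => /(H _).
have cv : (F \o (fun n : nat => (- n%:R)%R)) x @[x --> \oo] --> nu (\bigcap_n `]-oo, (- n%:R)%R]%classic).
  apply: nonincreasing_cvg_mu => [|n||n m nm].
  - by rewrite (le_lt_trans (probability_le1 _ _)) ?ltry.
  - exact: measurable_itv.
  - by apply: bigcapT_measurable => n; exact: measurable_itv.
  by apply/subsetPset => x/=; rewrite !in_itv/= => /le_trans; apply; rewrite lerN2 ler_nat.
have : \bigcap_n `]-oo, (- n%:R : R)%R]%classic = set0.
  rewrite -subset0 => t /(_ (Num.trunc `|t|).+1 I) /=; rewrite in_itv/= => tle.
  have h1 : (- t <= `|t|)%R by rewrite -normrN ler_norm.
  have h2 := truncnS_gt `|t|.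
  move: tle h1 h2; set k := ((Num.trunc _).+1%:R); move=> tle h1 h2; lra.
move=> E; rewrite E measure0 in cv.
have := cvg_lb cv Hn; rewrite lee_fin => /(lt_le_trans e0); by rewrite ltxx.
Qed.

Let rc (y e : R) : (forall n : nat, e%:E <= F (y + n.+1%:R^-1)%R) -> e%:E <= F y.
Proof.
move=> H.
have cv : (F \o (fun n : nat => (y + n.+1%:R^-1)%R)) x @[x --> \oo] --> nu (\bigcap_n `]-oo, (y + n.+1%:R^-1)%R]%classic).
  apply: nonincreasing_cvg_mu => [|n||n m nm].
  - by rewrite (le_lt_trans (probability_le1 _ _)) ?ltry.
  - exact: measurable_itv.
  - by apply: bigcapT_measurable => n; exact: measurable_itv.
  move=> /=; apply/subsetPset => x/=; rewrite !in_itv/= => /le_trans; apply.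
  by rewrite lerD2l lef_pV2 ?posrE// ler_nat.
have : \bigcap_n `]-oo, (y + n.+1%:R^-1)%R]%classic = `]-oo, y]%classic.
  apply/seteqP; split => t /=.
    move=> Ht; rewrite in_itv/=; apply/ler_addgt0Pr => r r0.
    have [n nr] : exists n : nat, (n.+1%:R^-1 < r)%R.
      exists (Num.trunc r^-1).
      rewrite -[X in (_ < X)%R](invrK r) ltf_pV2 ?posrE ?invr_gt0 ?ltr0n//.
      exact: truncnS_gt.
    have := Ht n I; rewrite /= in_itv/= => /le_trans; apply.
    by rewrite lerD2l ltW.
  rewrite in_itv/= => ty n _; rewrite /= in_itv/= (le_trans ty)// lerDl.
  by rewrite invr_ge0 ler0n.
move=> E; rewrite E in cv; exact: cvg_lb cv H.
Qed.

Lemma quantP (e y : R) : (0 < e < 1)%R -> (quantile nu e <= y)%R <-> e%:E <= F y.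
Proof.
move=> /andP[e0 e1]; rewrite /quantile.
set S := [set y : R | (e%:E <= nu [set` `]-oo, y]])%E].
have S0 : S !=set0 by case: (exists_ge _ e1) => z hz; exists z.
have Slb : has_lbound S.
  case: (exists_lt _ e0) => z hz; exists z => w Sw; rewrite leNgt; apply/negP => wz.
  have := F_nd _ _ (ltW wz); move: Sw; rewrite /S /= => Sw /(le_trans Sw) => /(lt_le_trans hz).
  by rewrite ltxx.
split.
- move=> qy; apply: rc => n.
  have [w Sw wl] : exists2 w, S w & (w < inf S + n.+1%:R^-1)%R.
    by apply: inf_lt S0 _; rewrite ltrDl invr_gt0 ltr0n.
  apply: (le_trans Sw); apply: F_nd; move: qy wl; set k := (n.+1%:R^-1)%R; set i := inf S.
  move=> qy wl; lra.
- by move=> Sy; exact: ge_inf Slb _ Sy.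
Qed.

Lemma quantile_cdf (c : R) (phi : R -> R) :
  (forall e, (0 < e < 1)%R -> quantile nu e = (c + phi e)%R) ->
  forall y, nu [set z | (z <= y)%R] = Ginv phi (y - c).
Proof.
move=> Hq y; rewrite setle_itv /Ginv.
have -> : [set e : R | (0 < e < 1)%R /\ (phi e <= y - c)%R] = [set e | (0 < e < 1)%R /\ e%:E <= F y].
  apply/seteqP; split => e /= [he H]; split => //.
    by apply/quantP => //; rewrite Hq //; move: H; lra.
  by move/quantP : H => /(_ he); rewrite Hq //; lra.
have F0 : 0 <= F y by [].
have F1 : F y <= 1 by exact: probability_le1.
move: F0 F1; rewrite -/(F y); case: (F y) => [p| |] //; rewrite !lee_fin => p0 p1.
have [p1'|p1'] := ltP p 1%R.
- have -> : [set e : R | (0 < e < 1)%R /\ e%:E <= p%:E] = `]0%R, p]%classic.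
    apply/seteqP; split => e /=; rewrite in_itv/= lee_fin.
      by case=> /andP[-> _].
    by case/andP => e0 ep; split => //; apply/andP; split => //; lra.
  rewrite lebesgue_measure_itv/= lte_fin; case: ltP => pp.
    by rewrite sube0.
  by congr _%:E; lra.
- have -> : [set e : R | (0 < e < 1)%R /\ e%:E <= p%:E] = `]0%R, 1%R[%classic.
    apply/seteqP; split => e /=; rewrite in_itv/= ?lee_fin.
      by case.
    by move=> he; split => //; move: he => /andP[? ?]; lra.
  rewrite lebesgue_measure_itv/= lte_fin ltr01 sube0; congr _%:E; lra.
Qed.
End quant.

Section dens.
Context d (T : measurableType d) (R : realType) (mu nu : {measure set T -> \bar R})
  (D : set T) (mD : measurable D) (g : T -> R) (mg : measurable_fun D g)
  (g0 : forall x, D x -> (0 <= g x)%R)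
  (hnu : forall A, measurable A -> A `<=` D -> nu A = (\int[mu]_(x in A) (g x)%:E)%E).
Local Open Scope ereal_scope.
Import HBNNSimple.

Lemma dens_cov f E : (forall x, 0 <= f x) ->
    measurable E -> E `<=` D -> measurable_fun E f ->
  \int[mu]_(x in E) (f x * (g x)%:E) = \int[nu]_(x in E) f x.
Proof.
move=> f0 mE ED mf; set G := fun x => (g x)%:E.
have mG : measurable_fun E G.
  by apply: measurable_funS mD ED _; exact/measurable_EFinP.
have G0 x : E x -> 0 <= G x by move=> Ex; rewrite lee_fin g0 //; exact: ED.
pose h := nnsfun_approx mE mf.
have -> : \int[nu]_(x in E) f x =
    lim (\int[nu]_(x in E) (EFin \o h n) x @[n --> \oo]).
  have fE x : E x -> f x = lim ((EFin \o h n) x @[n --> \oo]).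
    by move=> Ex; apply/esym/cvg_lim => //; exact: cvg_nnsfun_approx.
  under eq_integral => x /[!inE] /fE -> //.
  apply: monotone_convergence => //.
  - move=> n; apply/measurable_EFinP.
    by apply: (measurable_funS measurableT) => //; exact/measurable_funP.
  - by move=> n x Ex //=; rewrite lee_fin.
  - by move=> x Ex a b ab; rewrite lee_fin; exact/lefP/nd_nnsfun_approx.
have -> : \int[mu]_(x in E) (f x * G x) =
    lim (\int[mu]_(x in E) ((EFin \o h n) \* G) x @[n --> \oo]).
  have fg x : E x -> f x * G x = lim (((EFin \o h n) \* G) x @[n --> \oo]).
    by move=> Ex; apply/esym/cvg_lim => //; apply: cvgeZr;
      [by []|exact: cvg_nnsfun_approx].
  under eq_integral => x /[!inE] /fg -> //.
  apply: monotone_convergence => [//| | |].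
  - move=> n; apply/emeasurable_funM => //; apply/measurable_funTS.
    exact/measurable_EFinP.
  - by move=> n x Ex /=; apply: mule_ge0; [rewrite lee_fin|exact: G0].
  - move=> x Ex a b ab/=; rewrite lee_wpmul2r ?lee_fin; [by []|exact: G0|].
    exact/lefP/nd_nnsfun_approx.
suff suf n : \int[mu]_(x in E) ((EFin \o h n) x * G x) =
    \int[nu]_(x in E) (EFin \o h n) x.
  by under eq_fun do rewrite suf.
transitivity (\int[nu]_(x in E)
   (\sum_(y \in range (h n)) (y * \1_(h n @^-1` [set y]) x)%:E)); last first.
  by apply: eq_integral => t tE; rewrite /= fimfunE -fsumEFin.
have indich m r : measurable_fun E (fun x => (r * \1_(h m @^-1` [set r]) x)%:E).
  by apply: (measurable_comp measurableT) => //; exact: measurable_funM.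
rewrite ge0_integral_fsum//; last by move=> m y Ey; exact: nnfun_muleindic_ge0.
transitivity (\int[mu]_(x in E) (\sum_(y \in range (h n))
    (y * \1_(h n @^-1` [set y]) x)%:E * G x)).
  under [RHS]eq_integral => x xE.
    rewrite -ge0_mule_fsuml => [|y]; last exact: nnfun_muleindic_ge0.
    rewrite fsumEFin // -(fimfunE _ x); over.
  by [].
rewrite ge0_integral_fsum//; last 2 first.
  - by move=> y; apply: emeasurable_funM => //.
  - by move=> m y Ey; apply: mule_ge0; [exact: nnfun_muleindic_ge0|exact: G0].
apply: eq_fsbigr => r rhn.
under [RHS]eq_integral do rewrite EFinM.
rewrite integralZl_indic_nnsfun => //.
under eq_integral do rewrite EFinM -muleA.
rewrite ge0_integralZl//.
- under eq_integral do rewrite muleC.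
  rewrite (eq_integral (G \_ (h n @^-1` [set r]))); last first.
    by move=> x xE; rewrite epatch_indic.
  rewrite -integral_mkcondr -hnu//.
  + by rewrite integral_indic// setIC.
  + by move=> x [Ex _]; exact: ED.
- apply: (@emeasurable_funM _ _ _ _ (fun x => (\1_(h n @^-1` [set r]) x)%:E) G) => //.
  exact/measurable_EFinP.
- by move=> t Et; apply: mule_ge0; [rewrite lee_fin|exact: G0].
- by move: rhn; rewrite inE => -[t _ <-]; rewrite lee_fin.
Qed.
End dens.

Lemma addeI_fin {R : realType} (x u v : \bar R) : x \is a fin_num -> (x + u = x + v)%E -> u = v.
Proof.
move=> xf e; have := congr1 (fun t => t - x)%E e; rewrite /= !(addeC x) !addeK //.
Qed.

Section uniq.
Context {R : realType} (h : R -> R) (mh : measurable_fun setT h) (h0 : forall x, 0 <= h x).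
Local Notation RT := (measurableTypeR R).
Local Open Scope ereal_scope.

Definition hmeas (A : set RT) : \bar R := \int[lebesgue_measure]_(x in A) (h x)%:E.

Let hmeas0 : hmeas set0 = 0. Proof. by rewrite /hmeas integral_set0. Qed.
Let hmeas_ge0 A : 0 <= hmeas A.
Proof. by apply: integral_ge0 => x _; rewrite lee_fin. Qed.
Let hmeas_sa : semi_sigma_additive hmeas.
Proof.
have mh' : measurable_fun setT (fun x => (h x)%:E) by exact/measurable_EFinP.
have h0' : forall x, 0 <= (h x)%:E by move=> x; rewrite lee_fin.
exact: (@semi_sigma_additive_nng_induced _ RT R lebesgue_measure (fun x => (h x)%:E) mh' h0').
Qed.
HB.instance Definition _ := isMeasure.Build _ RT R hmeas hmeas0 hmeas_ge0 hmeas_sa.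

Lemma uniq_neg (mu : {measure set RT -> \bar R}) :
  (forall x : R, (x <= 0)%R -> mu [set z : R | (z <= x)%R] = hmeas [set z : R | (z <= x)%R]) ->
  mu [set z : R | (z <= 0)%R] < +oo ->
  forall A : set RT, measurable A -> A `<=` [set z : R | (z <= 0)%R] -> mu A = hmeas A.
Proof.
move=> Hc Hf A mA AD.
have mDn : measurable ([set z : R | (z <= 0)%R] : set RT) by rewrite setle_itv; exact: measurable_itv.
have mB x : measurable ([set z : R | (z <= x)%R] : set RT) by rewrite setle_itv; exact: measurable_itv.
rewrite -(setIidl AD).
apply: (@measure_unique _ R RT (@ocitv R) (fun k : nat => (`] (- (k%:R : R))%R, k%:R]%classic : set RT)) erefl (@ocitvI R)
  (fun k => is_ocitv _ _) _ (mrestr mu mDn) (mrestr hmeas mDn) _ _ A mA).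

- rewrite -subTset => t _ /=; exists (Num.trunc `|t|).+1 => //=; rewrite in_itv/=.
  have h1 : (- t <= `|t|)%R by rewrite -normrN ler_norm.
  have h1' : (t <= `|t|)%R by rewrite ler_norm.
  have h2 := truncnS_gt `|t|.
  move: h1 h1' h2; set k := ((Num.trunc _).+1%:R); move=> h1 h1' h2.
  apply/andP; split; lra.
- move=> _ [[a b] _ <-] /=; rewrite /mrestr.
  have -> : `]a, b]%classic `&` [set z : R | (z <= 0)%R] = `]a, Num.min b 0%R]%classic.
    apply/seteqP; split => z /=; rewrite !in_itv/= ?le_min.
      by case=> /andP[-> ->] ->.
    by case/andP => -> /andP[-> ->].
  set c := Num.min b 0%R.
  have c0 : (c <= 0)%R by rewrite /c ge_min lexx orbT.
  have [ca|ac] := leP c a.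
    by rewrite set_itv_ge ?measure0// bnd_simp -leNgt.
  have U : [set z : R | (z <= c)%R] = [set z : R | (z <= a)%R] `|` `]a, c]%classic.
    apply/seteqP; split => z /=; rewrite ?in_itv/=.
      by move=> zc; case: (leP z a) => za; [left|right; apply/andP].
    by case=> [za|/andP[_ //]]; lra.
  have dj : [set z : R | (z <= a)%R] `&` `]a, c]%classic = set0.
    rewrite -subset0 => z [/= za]; rewrite in_itv/= => /andP[az _].
    by move: (lt_le_trans az za); rewrite ltxx.
  have mI : measurable `]a, c]%classic by exact: measurable_itv.
  have e1 : mu [set z : R | (z <= c)%R] = mu [set z : R | (z <= a)%R] + mu `]a, c]%classic.
    by rewrite U; exact: measureU.
  have e2 : hmeas [set z : R | (z <= c)%R] = hmeas [set z : R | (z <= a)%R] + hmeas `]a, c]%classic.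
    by rewrite U; exact: measureU.
  have ha : (a <= 0)%R by apply/ltW/(lt_le_trans ac).
  apply: (@addeI_fin _ (mu [set z : R | (z <= a)%R])).
    rewrite ge0_fin_numE //.
    by apply: le_lt_trans Hf; apply: le_measure; rewrite ?inE //; move=> z /=; lra.
  transitivity (mu [set z : R | (z <= c)%R]); first by rewrite e1.
  by rewrite (Hc c c0) e2 (Hc a ha).
- move=> k; rewrite /mrestr; apply: le_lt_trans Hf; apply: le_measure; rewrite ?inE //.
  by apply: measurableI => //; exact: measurable_itv.
Qed.
End uniq.

Section helpers.
Context {R : realType}.
Local Open Scope ereal_scope.
Local Notation RT := (measurableTypeR R).

Lemma to1 d (T : measurableType d) (P : probability T R) (Z : T -> R)
  (mZ : measurable_fun setT Z) :
  (fun n : nat => P (Z @^-1` [set z : R | (z <= n%:R)%R])) @ \oo --> 1.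
Proof.
have UE : \bigcup_n (Z @^-1` [set z : R | (z <= n%:R)%R]) = setT.
  rewrite -subTset => t _ /=; exists (Num.trunc `|Z t|).+1 => //=.
  by rewrite (le_trans (ler_norm (Z t)))// ltW// truncnS_gt.
rewrite -(probability_setT P) -UE.
have mS n : measurable (Z @^-1` [set z : R | (z <= n%:R)%R]).
  by rewrite -[X in measurable X]setTI; apply: mZ => //; rewrite setle_itv; exact: measurable_itv.
apply: (@nondecreasing_cvg_mu _ _ _ P (fun n => Z @^-1` [set z : R | (z <= n%:R)%R])).
- exact: mS.
- exact: bigcup_measurable.
- move=> n m nm; apply/subsetPset => x/= hx; apply: (le_trans hx).
  by rewrite ler_nat.
Qed.

Lemma bridge d (T : measurableType d) (P : {measure set T -> \bar R}) (Z : T -> R)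
  (mZ : measurable_fun setT Z) (A : set R) (mA : measurable A)
  (f : R -> \bar R) (mf : measurable_fun A f) (f0 : forall x, 0 <= f x) :
  \int[@pushforward _ _ T R R P Z]_(x in A) f x =
  \int[@pushforward _ _ T RT R P Z]_(x in A) f x.
Proof.
have f0' : {in A, forall y, 0 <= f y} by move=> x _; exact: f0.
rewrite (ge0_integral_pushforward mZ P mA mf f0').
by rewrite (@ge0_integral_pushforward _ _ T RT R Z mZ P A f mA mf f0').
Qed.
End helpers.
Theorem propositionB7 (R : realType)
  (* the original model P: X, Y(0), observed Y *)
  (d : measure_display) (T : measurableType d) (P : probability T R)
  (X Y0 Y : T -> R)
  (mX : measurable_fun [set: T] X) (mY0 : measurable_fun [set: T] Y0)
  (mY : measurable_fun [set: T] Y)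
  (X_ge0 : forall w, 0 <= X w)
  (PX0_gt0 : (0 < P (X @^-1` [set 0%R]))%E)
  (fX : R -> R)
  (mfX : measurable_fun [set x : R | (0 < x)%R] fX)
  (fX_ge0 : forall x, 0 < x -> 0 <= fX x)
  (fX_density : forall A, measurable A -> A `<=` [set x : R | (0 < x)%R] ->
     P (X @^-1` A) = (\int[lebesgue_measure]_(x in A) (fX x)%:E)%E)
  (Y0_int : P.-integrable [set: T] (EFin \o Y0))
  (Y_obs : forall w, X w = 0 -> Y w = Y0 w)
  (* conditional distribution of Y(0) given X = x, x > 0 *)
  (kappa : R -> probability R R)
  (kappa_cond : cond_distribution P X Y0 [set x : R | (0 < x)%R] kappa)
  (* Assumption A6 *)
  (s sstar phi h : R -> R)
  (A6i : forall x e, 0 < x -> 0 < e < 1 -> quantile (kappa x) e = s x + phi e)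
  (A6ii_s : real_analytic_on [set x : R | (0 < x)%R] s)
  (A6ii_sstar : real_analytic_on [set: R] sstar)
  (A6ii_ext : forall x, 0 < x -> sstar x = s x)
  (A6iii_phi : forall e1 e2, 0 < e1 -> e1 < e2 -> e2 < 1 -> phi e1 < phi e2)
  (h_cont : continuous h)
  (h_ge0 : forall x, 0 <= h x)
  (h_fX : forall x, 0 < x -> h x = fX x)
  (A6iii_mix : forall y,
     (\int[lebesgue_measure]_(x in [set: R]) (Ginv phi (y - sstar x) * (h x)%:E))%E
       = P (Y0 @^-1` [set z : R | (z <= y)%R]))
  (* the constructed model P* on (X*, Y*(0)) *)
  (d' : measure_display) (T' : measurableType d') (Pstar : probability T' R)
  (Xs Ys0 : T' -> R)
  (mXs : measurable_fun [set: T'] Xs) (mYs0 : measurable_fun [set: T'] Ys0)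
  (Fstar_neg : forall x, x < 0 ->
     Pstar (Xs @^-1` [set z : R | (z <= x)%R]) = (\int[lebesgue_measure]_(t in [set z : R | (z <= x)%R]) (h t)%:E)%E)
  (Fstar_nonneg : forall x, 0 <= x ->
     Pstar (Xs @^-1` [set z : R | (z <= x)%R]) = P (X @^-1` [set z : R | (z <= x)%R]))
  (kappas : R -> probability R R)
  (kappas_cond : cond_distribution Pstar Xs Ys0 [set: R] kappas)
  (kappas_quant : forall x e, 0 < e < 1 -> quantile (kappas x) e = sstar x + phi e) :
  Pstar (Xs @^-1` [set z : R | (z <= 0)%R]) = P (X @^-1` [set 0]) /\
  forall y : R,
    condP Pstar (Ys0 @^-1` [set z : R | (z <= y)%R]) (Xs @^-1` [set z : R | (z <= 0)%R])
    = condP P (Y @^-1` [set z : R | (z <= y)%R]) (X @^-1` [set 0]).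
Proof.
pose Bz (y : R) := [set z : R | (z <= y)%R].
pose Dn := Bz 0%R.
pose Dp := [set x : R | (0 < x)%R].
have mBz y : measurable (Bz y) by rewrite /Bz setle_itv; exact: measurable_itv.
have mDp : measurable Dp.
  have -> : Dp = `]0%R, +oo[%classic by apply/seteqP; split => z; rewrite /= in_itv/= andbT.
  exact: measurable_itv.
have XDn : X @^-1` Dn = X @^-1` [set 0%R].
  apply/seteqP; split => w /=; last by move=> ->; rewrite /Dn /Bz /=.
  by move=> hw; apply/eqP; rewrite eq_le X_ge0 andbT; exact: hw.
have part1 : Pstar (Xs @^-1` Dn) = P (X @^-1` [set 0%R]).
  by rewrite -XDn; exact: Fstar_nonneg.
split; first exact: part1.
have kcs x y : kappas x (Bz y) = Ginv phi (y - sstar x).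
  exact: (@quantile_cdf R (kappas x) (sstar x) phi (kappas_quant x) y).
have kc x y : (0 < x)%R -> kappa x (Bz y) = Ginv phi (y - sstar x).
  move=> x0; rewrite A6ii_ext //.
  by apply: (@quantile_cdf R (kappa x) (s x) phi) => e he; exact: A6i.
case: kappas_cond => mks kscond.
case: kappa_cond => mk kcond.
have mh : measurable_fun setT h := continuous_measurable_fun h_cont.
have mix' y : (\int[lebesgue_measure]_(x in [set: R]) (kappas x (Bz y) * (h x)%:E) = P (Y0 @^-1` Bz y))%E.
  rewrite -A6iii_mix; apply: eq_integral => x _; by rewrite kcs.
have intT : (\int[lebesgue_measure]_(x in [set: R]) (h x)%:E = 1)%E.
  have lim_x x : limn (fun n : nat => (kappas x (Bz n%:R) * (h x)%:E)%E) = (h x)%:E.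
    apply/cvg_lim => //; rewrite -[X in _ --> X]mul1e; apply: cvgeZr => //.
    have H1 := (@to1 R _ R (kappas x) id (@measurable_id _ R setT)).
    exact: H1.
  transitivity (\int[lebesgue_measure]_(x in [set: R]) limn (fun n : nat => (kappas x (Bz n%:R) * (h x)%:E)%E))%E.
    by apply: eq_integral => x _; rewrite lim_x.
  rewrite monotone_convergence //.
  - have -> : (fun n : nat => \int[lebesgue_measure]_(x in [set: R]) (kappas x (Bz n%:R) * (h x)%:E))%E
        = (fun n : nat => P (Y0 @^-1` Bz n%:R)) by apply/funext => n; exact: mix'.
    by apply/cvg_lim => //; exact: to1.
  - move=> n; apply: emeasurable_funM; first exact: mks.
    exact/measurable_EFinP.
  - by move=> n x _; apply: mule_ge0 => //; rewrite lee_fin.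
  - move=> x _ n m nm; apply: lee_wpmul2r; first by rewrite lee_fin.
    apply: le_measure; rewrite ?inE //.
    by move=> z /= hz; apply: (le_trans hz); rewrite ler_nat.
have mpre A : measurable A -> measurable (X @^-1` A).
  by move=> mA; rewrite -[X in measurable X]setTI; exact: mX.
have mpreY0 A : measurable A -> measurable (Y0 @^-1` A).
  by move=> mA; rewrite -[X in measurable X]setTI; exact: mY0.
have m0 : measurable [set 0%R : R] by exact: measurable_set1.
have intDp : (\int[lebesgue_measure]_(x in Dp) (h x)%:E = P (X @^-1` Dp))%E.
  rewrite (fX_density _ mDp) //; apply: eq_integral => x; rewrite inE => x0.
  by rewrite h_fX.
have DnDp : [set: R] = Dn `|` Dp.
  apply/seteqP; split => x // _; rewrite /Dn /Bz /Dp /=.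
  by case: (leP x 0%R) => hx; [left|right].
have dDnDp : Dn `&` Dp = set0.
  rewrite -subset0 => x []; rewrite /Dn /Bz /Dp /= => h1 h2.
  by move: (lt_le_trans h2 h1); rewrite ltxx.
have PU : (P (X @^-1` Dp) + P (X @^-1` [set 0%R]) = 1)%E.
  rewrite -measureU; [|exact: mpre|exact: mpre|]; last first.
    rewrite -preimage_setI -subset0 => w []; rewrite /Dp /= => h1 h2.
    by move: h1; rewrite h2 ltxx.
  rewrite -(probability_setT P); congr (P _); apply/seteqP; split => w // _ /=.
  by have := X_ge0 w; rewrite le_eqVlt => /orP[/eqP <-|]; [right|left].
have Tsplit : (\int[lebesgue_measure]_(x in [set: R]) (h x)%:E =
   \int[lebesgue_measure]_(x in Dn) (h x)%:E + \int[lebesgue_measure]_(x in Dp) (h x)%:E)%E.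
  rewrite DnDp; apply: ge0_integral_setU.
  - exact: mBz.
  - exact: mDp.
  - apply: measurable_funTS; exact/measurable_EFinP.
  - by move=> x _; rewrite lee_fin.
  - by rewrite /disj_set dDnDp eqxx.
have intDn : (\int[lebesgue_measure]_(x in Dn) (h x)%:E = P (X @^-1` [set 0%R]))%E.
  apply: (@addeI_fin _ (P (X @^-1` Dp))); first by rewrite ge0_fin_numE //; apply: (le_lt_trans (probability_le1 P (mpre _ mDp))); exact: ltry.
  by rewrite PU -intDp addeC -Tsplit intT.
have mpreXs A : measurable A -> measurable (Xs @^-1` A).
  by move=> mA; rewrite -[X in measurable X]setTI; exact: mXs.
have mXs' : measurable_fun [set: T'] (Xs : T' -> measurableTypeR R) by exact: mXs.
have mX' : measurable_fun [set: T] (X : T -> measurableTypeR R) by exact: mX.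
have uq : forall A : set (measurableTypeR R), measurable A -> A `<=` Dn ->
    Pstar (Xs @^-1` A) = hmeas h A.
  move=> A mA AD.
  apply: (@uniq_neg R h mh h_ge0 (@pushforward _ _ T' (measurableTypeR R) R Pstar Xs) _ _ A mA AD).
  - move=> x; rewrite le_eqVlt => /orP[/eqP ->|x0].
      transitivity (P (X @^-1` [set 0%R])); first exact: part1.
      exact: (esym intDn).
    exact: (Fstar_neg _ x0).
  - rewrite /pushforward; apply: (le_lt_trans (probability_le1 Pstar (mpreXs _ (mBz 0%R)))).
    exact: ltry.
move=> y.
have hs : Pstar (Xs @^-1` Dn `&` Ys0 @^-1` Bz y) =
    (\int[lebesgue_measure]_(x in Dn) (kappas x (Bz y) * (h x)%:E))%E.
  rewrite kscond //; [|exact: mBz].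
  rewrite (@bridge R _ T' Pstar Xs mXs Dn (mBz 0%R) (fun x => kappas x (Bz y))
     (measurable_funTS (mks _ (mBz y))) (fun x => measure_ge0 (kappas x) (Bz y))).
  symmetry; apply: (@dens_cov _ (measurableTypeR R) R lebesgue_measure
     (@pushforward _ _ T' (measurableTypeR R) R Pstar Xs) Dn (mBz 0%R) h
     (measurable_funTS mh) (fun x _ => h_ge0 x) uq (fun x => kappas x (Bz y)) Dn).
  - exact: mXs'.
  - exact: (fun x => measure_ge0 (kappas x) (Bz y)).
  - exact: mBz.
  - by [].
  - exact: measurable_funTS (mks _ (mBz y)).
have hp : P (X @^-1` Dp `&` Y0 @^-1` Bz y) =
    (\int[lebesgue_measure]_(x in Dp) (kappas x (Bz y) * (h x)%:E))%E.
  rewrite (kcond _ _ mDp (@subset_refl _ Dp) (mBz y)).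
  rewrite (@bridge R _ T P X mX Dp mDp (fun x => kappa x (Bz y))
     (measurable_funTS (mk _ (mBz y))) (fun x => measure_ge0 (kappa x) (Bz y))).
  symmetry.
  transitivity (\int[lebesgue_measure]_(x in Dp) (kappa x (Bz y) * (fX x)%:E))%E.
    apply: eq_integral => x; rewrite inE => x0.
    by rewrite (kc _ _ x0) -kcs h_fX.
  apply: (@dens_cov _ (measurableTypeR R) R lebesgue_measure
     (@pushforward _ _ T (measurableTypeR R) R P X) Dp mDp fX
     mfX fX_ge0 fX_density (fun x => kappa x (Bz y)) Dp).
  - exact: mX'.
  - exact: (fun x => measure_ge0 (kappa x) (Bz y)).
  - exact: mDp.
  - by [].
  - exact: measurable_funTS (mk _ (mBz y)).
have e1 : P (Y0 @^-1` Bz y) = (Pstar (Xs @^-1` Dn `&` Ys0 @^-1` Bz y) + P (X @^-1` Dp `&` Y0 @^-1` Bz y))%E.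
  rewrite -mix' hs hp DnDp; apply: ge0_integral_setU.
  - exact: mBz.
  - exact: mDp.
  - apply: measurable_funTS; apply: emeasurable_funM; first exact: mks.
    exact/measurable_EFinP.
  - by move=> x _; apply: mule_ge0 => //; rewrite lee_fin.
  - by rewrite /disj_set dDnDp eqxx.
have e2 : P (Y0 @^-1` Bz y) = (P (X @^-1` [set 0%R] `&` Y0 @^-1` Bz y) + P (X @^-1` Dp `&` Y0 @^-1` Bz y))%E.
  rewrite -measureU; last first.
  - rewrite setIACA -preimage_setI -subset0 => w [[]]; rewrite /Dp /= => h1 h2 _.
    by move: h2; rewrite h1 ltxx.
  - by apply: measurableI; [exact: mpre|exact: mpreY0].
  - by apply: measurableI; [exact: mpre|exact: mpreY0].
  congr (P _); apply/seteqP; split => w /=; last by case=> -[].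
  move=> hw; have := X_ge0 w; rewrite le_eqVlt => /orP[/eqP h0|h0]; [left|right]; by split.
have key : Pstar (Xs @^-1` Dn `&` Ys0 @^-1` Bz y) = P (X @^-1` [set 0%R] `&` Y0 @^-1` Bz y).
  apply: (@addeI_fin _ (P (X @^-1` Dp `&` Y0 @^-1` Bz y))).
    rewrite ge0_fin_numE //; apply: (le_lt_trans (probability_le1 P _)); last exact: ltry.
    by apply: measurableI; [exact: mpre|exact: mpreY0].
  by rewrite addeC -e1 e2 addeC.
rewrite /condP.
have -> : Ys0 @^-1` [set z : R | (z <= y)%R] `&` Xs @^-1` [set z : R | (z <= 0)%R] = Xs @^-1` Dn `&` Ys0 @^-1` Bz y.
  by rewrite setIC.
have -> : Y @^-1` [set z : R | (z <= y)%R] `&` X @^-1` [set 0%R] = X @^-1` [set 0%R] `&` Y0 @^-1` Bz y.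
  rewrite setIC; apply/seteqP; split => w [h1 h2]; split => //=.
    by rewrite -Y_obs.
  by rewrite Y_obs.
have -> : Pstar (Xs @^-1` [set z : R | (z <= 0)%R]) = P (X @^-1` [set 0%R]) := part1.
by rewrite key.
Qed.
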